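(* Let $\gamma\geq0$ and $G=(V,E,\omega)\in\mathcal C_\gamma$. Define, for $i,j\in V$, $\tilde\omega_{ij}:=-d_j^r\sum_{m=1}^{n-1}\Lambda_m\phi^m_i\phi^m_j$ if $i\neq j$ and $\tilde\omega_{ii}:=0$. Then $\tilde\omega_{ij}\geq0$ for all $i,j\in V$, and $\omega_{ij}>0$ implies $\tilde\omega_{ij}>0$. If, additionally, $G\in\mathcal C$, then $\tilde\omega_{ij}\geq d_i^{-r}\omega_{ij}$ for all $i,j\in V$.
   Context: $\mathcal{G}$ is the set of finite, simple, connected, undirected, edge-weighted graphs $G=(V,E,\omega)$ with $V=\{1,\dots,n\}$, $n\geq2$, weights $\omega_{ij}=\omega_{ji}>0$ on edges, $0$ otherwise. $d_i=\sum_j\omega_{ij}$. $\mathcal V$: functions $V\to\mathbb R$. Fixed $r\in[0,1]$: $\langle u,v\rangle_{\mathcal V}=\sum_id_i^ru_iv_i$, $(\Delta u)_i=d_i^{-r}\sum_j\omega_{ij}(u_i-u_j)$, $\mathcal M(u)=\sum_id_i^ru_i$, $\mathrm{vol}(V)=\sum_id_i^r$, $\mathcal A(u)=\frac{\mathcal M(u)}{\mathrm{vol}(V)}\chi_V$. $0=\lambda_0<\lambda_1\leq\dots\leq\lambda_{n-1}$: eigenvalues of $\Delta$ with $\langle\cdot,\cdot\rangle_{\mathcal V}$-orthonormal eigenfunctions $\phi^0=\mathrm{vol}(V)^{-1/2}\chi_V,\phi^1,\dots,\phi^{n-1}$; $\Lambda_m=\lambda_m+\gamma/\lambda_m$ for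 $m\geq1$. Equilibrium measure $\nu^S$ ($S\subsetneq V$): unique $\nu\in\mathcal V$ with $(\Delta\nu)_i=1$ on $S$, $\nu=0$ off $S$. $f^j:=\nu^{V\setminus\{j\}}-\mathcal A(\nu^{V\setminus\{j\}})$. $\mathcal C=\{G\in\mathcal G:\forall j\ \forall i\neq j:\ f^j_i\geq0\}$; $\mathcal C^0=\{G\in\mathcal G:\forall j\ \forall i\neq j:\ \omega_{ij}>0\text{ or }f^j_i\geq0\}$; for $\gamma>0$, $\mathcal C_\gamma=\{G\in\mathcal C^0:\forall j\ \forall i\neq j:\ \omega_{ij}=0\text{ or }d_i^{-r}\omega_{ij}+\gamma\frac{d_j^r}{\mathrm{vol}(V)}f^j_i>0\}$; $\mathcal C_0:=\mathcal G$. *)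

(* Defs.v *)
From HB Require Import structures.
From mathcomp Require Import all_boot all_order all_algebra.
From mathcomp Require Import classical_sets reals exp.
Set Implicit Arguments. Unset Strict Implicit. Unset Printing Implicit Defensive.
Import Order.TTheory GRing.Theory Num.Theory.
Local Open Scope ring_scope.

(* A weighted graph on V = 'I_n is given by its weight function w : 'I_n -> 'I_n -> R,
   w i j > 0 iff {i,j} is an edge, w i j = 0 otherwise. *)
Definition is_graph (R : realType) (n : nat) (w : 'I_n -> 'I_n -> R) : Prop :=
  [/\ (2 <= n)%N,
      (forall i j, w i j = w j i),
      (forall i, w i i = 0),
      (forall i j, 0 <= w i j) &
      (forall i j, connect (fun a b => 0 < w a b) i j)].

Section Graph.
Variables (R : realType) (n : nat) (w : 'I_n -> 'I_n -> R) (r : R).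

Definition deg (i : 'I_n) : R := \sum_j w i j.
Definition degr (i : 'I_n) : R := deg i `^ r.

Definition inner (u v : 'I_n -> R) : R := \sum_i degr i * u i * v i.
Definition lap (u : 'I_n -> R) (i : 'I_n) : R :=
  (degr i)^-1 * \sum_j w i j * (u i - u j).
Definition mass (u : 'I_n -> R) : R := \sum_i degr i * u i.
Definition vol : R := \sum_i degr i.
Definition avg (u : 'I_n -> R) : 'I_n -> R := fun _ => mass u / vol.

Definition is_eqmeas (S : {set 'I_n}) (nu : 'I_n -> R) : Prop :=
  (forall i, i \in S -> lap nu i = 1) /\ (forall i, i \notin S -> nu i = 0).
Definition eqmeas (S : {set 'I_n}) : 'I_n -> R :=
  fun i => (xget (0 : {ffun 'I_n -> R}) [set f | is_eqmeas S (fun k => f k)]) i.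

Definition fj (j : 'I_n) : 'I_n -> R :=
  fun i => eqmeas [set~ j] i - avg (eqmeas [set~ j]) i.

Definition inC : Prop := forall j i, i != j -> 0 <= fj j i.
Definition inC0 : Prop := forall j i, i != j -> 0 < w i j \/ 0 <= fj j i.
(* C_gamma for gamma > 0; C_0 := all graphs *)
Definition inCgamma (gamma : R) : Prop :=
  gamma = 0 \/
  (0 < gamma /\ inC0 /\
   forall j i, i != j ->
     w i j = 0 \/ 0 < (degr i)^-1 * w i j + gamma * degr j / vol * fj j i).

Definition is_eigendecomp (lam : 'I_n -> R) (phi : 'I_n -> 'I_n -> R) : Prop :=
  [/\ (forall m : 'I_n, (m : nat) = 0%N -> lam m = 0 /\ forall i, phi m i = (Num.sqrt vol)^-1),
      (forall m : 'I_n, (0 < m)%N -> 0 < lam m),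
      (forall m k : 'I_n, (m <= k)%N -> lam m <= lam k),
      (forall m i, lap (phi m) i = lam m * phi m i) &
      (forall m k, inner (phi m) (phi k) = (m == k)%:R)].

Definition wtilde (gamma : R) (lam : 'I_n -> R) (phi : 'I_n -> 'I_n -> R)
  (i j : 'I_n) : R :=
  if i == j then 0 else
  - (degr j * \sum_(m : 'I_n | (0 < m)%N) (lam m + gamma / lam m) * phi m i * phi m j).

End Graph.

(* Main.v *)
Require Import Defs.
From HB Require Import structures.
From mathcomp Require Import all_boot all_order all_algebra.
From mathcomp Require Import classical_sets reals exp.
From mathcomp Require Import ring lra.
Import Order.TTheory GRing.Theory Num.Theory.
Local Open Scope ring_scope.

Section Aux.
Variables (R : realType) (n : nat) (w : 'I_n -> 'I_n -> R) (r : R).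
Variables (lam : 'I_n -> R) (phi : 'I_n -> 'I_n -> R).
Hypothesis Hsym : forall i j, w i j = w j i.
Hypothesis Heig : is_eigendecomp w r lam phi.

Local Notation d := (degr w r).

Lemma compl i k : \sum_m d i * phi m i * phi m k = (i == k)%:R.
Proof.
case: Heig => _ _ _ _ Hon.
pose P : 'M[R]_n := \matrix_(m, i) phi m i.
pose Q : 'M[R]_n := \matrix_(i, m) (d i * phi m i).
have PQ : P *m Q = 1%:M.
  apply/matrixP => m k'; rewrite !mxE -Hon /inner.
  by apply: eq_bigr => i' _; rewrite !mxE mulrCA mulrA.
have := mulmx1C PQ => /matrixP /(_ i k); rewrite !mxE => <-.
by apply: eq_bigr => m _; rewrite !mxE.
Qed.

Lemma dpos i : 0 < d i.
Proof.
rewrite lt_def powR_ge0 andbT; apply/eqP => d0.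
have := compl i i; rewrite eqxx big1 ?(@oner_eq0 R) //.
  by move/eqP; rewrite eq_sym oner_eq0.
by move=> m _; rewrite d0 !mul0r.
Qed.

Lemma compl2 i k : \sum_m phi m i * phi m k = (i == k)%:R / d i.
Proof.
apply: (@mulfI _ (d i)); first by rewrite gt_eqF ?dpos.
have dn0 : d i != 0 by rewrite gt_eqF ?dpos.
rewrite [RHS]mulrCA (divff dn0) mulr1 mulr_sumr -(compl i k).
by apply: eq_bigr => m _; rewrite mulrA.
Qed.


Lemma dn0 i : d i != 0.
Proof. by rewrite gt_eqF ?dpos. Qed.

Lemma antisym (F : 'I_n -> 'I_n -> R) :
  (forall i k, F k i = - F i k) -> \sum_i \sum_k F i k = 0.
Proof.
move=> HF; set S := \sum_i _.
have : S = - S.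
  rewrite /S {1}exchange_big -sumrN; apply: eq_bigr => i _.
  by rewrite -sumrN; apply: eq_bigr => k _; rewrite HF.
move=> HS; have : S *+ 2 = 0 by rewrite mulr2n {1}HS addNr.
by move/eqP; rewrite mulrn_eq0 /= => /eqP.
Qed.

Lemma lap_lin (P : pred 'I_n) (c : 'I_n -> R) (f : 'I_n -> 'I_n -> R) i :
  lap w r (fun k => \sum_(m | P m) c m * f m k) i
  = \sum_(m | P m) c m * lap w r (f m) i.
Proof.
rewrite /lap; under eq_bigr do rewrite -sumrB mulr_sumr.
rewrite exchange_big mulr_sumr; apply: eq_bigr => m _.
rewrite mulrCA !mulr_sumr; apply: eq_bigr => k _.
ring.
Qed.

Lemma lap_affine a b (u : 'I_n -> R) i :
  lap w r (fun k => a * (u k - b)) i = a * lap w r u i.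
Proof.
rewrite /lap mulrCA !mulr_sumr; apply: eq_bigr => k _; ring.
Qed.

Lemma lap_sub (u v : 'I_n -> R) i :
  lap w r (fun k => u k - v k) i = lap w r u i - lap w r v i.
Proof.
rewrite /lap -mulrBr -sumrB !mulr_sumr; apply: eq_bigr => k _; ring.
Qed.

Lemma lap_const c i : lap w r (fun _ => c) i = 0.
Proof. by rewrite /lap big1 ?mulr0 // => k _; rewrite subrr mulr0. Qed.

Lemma inner_lap a b :
  inner w r (lap w r a) b = \sum_i \sum_k w i k * (a i - a k) * b i.
Proof.
apply: eq_bigr => i _; rewrite /lap mulrA (divff (dn0 i)) mul1r mulr_suml.
done.
Qed.

Lemma selfadj a b : inner w r (lap w r a) b = inner w r a (lap w r b).
Proof.
apply/eqP; rewrite -subr_eq0; apply/eqP.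
have -> : inner w r a (lap w r b) = \sum_i \sum_k w i k * (b i - b k) * a i.
  rewrite -inner_lap /inner; apply: eq_bigr => i _; ring.
rewrite inner_lap -sumrB.
under eq_bigr do rewrite -sumrB.
apply: antisym => i k; rewrite Hsym; ring.
Qed.

Lemma mass_lap u : mass w r (lap w r u) = 0.
Proof.
have -> : mass w r (lap w r u) = inner w r (lap w r u) (fun _ => 1).
  by apply: eq_bigr => i _; rewrite mulr1.
rewrite inner_lap; apply: antisym => i k; rewrite Hsym; ring.
Qed.


Lemma expand u i : u i = \sum_m phi m i * inner w r (phi m) u.
Proof.
have H : forall k, \sum_m phi m i * (d k * phi m k * u k) = u k * (k == i)%:R.
  move=> k; rewrite -(compl k i) mulr_sumr; apply: eq_bigr => m _; ring.
under eq_bigr do rewrite /inner mulr_sumr.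
rewrite exchange_big (eq_bigr _ (fun k _ => H k)) (bigD1 i) //= eqxx mulr1.
by rewrite big1 ?addr0 // => k /negbTE ->; rewrite mulr0.
Qed.

Lemma inner_eig m u : inner w r (lap w r (phi m)) u = lam m * inner w r (phi m) u.
Proof.
case: Heig => _ _ _ Hl _.
rewrite /inner mulr_sumr; apply: eq_bigr => i _; rewrite Hl; ring.
Qed.

Lemma const_of_lap0 u : (forall i, lap w r u i = 0) -> forall i k, u i = u k.
Proof.
move=> Hu.
case: Heig => H0 Hpos _ _ _.
have E : forall i, u i = \sum_(m : 'I_n) (if ((m : nat) == 0)%N then (Num.sqrt (vol w r))^-1 * inner w r (phi m) u else 0).
  move=> i; rewrite {1}(expand u i); apply: eq_bigr => m _.
  case: eqP => [/H0 [_ ->] //|/eqP]; rewrite -lt0n => /Hpos lp.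
  suff -> : inner w r (phi m) u = 0 by rewrite mulr0.
  apply: (@mulfI _ (lam m)); first by rewrite gt_eqF.
  rewrite mulr0 -inner_eig selfadj /inner big1 // => k _; rewrite Hu mulr0 //.
by move=> i k; rewrite (E i) (E k).
Qed.

Lemma sum_pos (F : 'I_n -> R) : (forall m : 'I_n, (m : nat) = 0%N -> F m = 0) ->
  \sum_(m : 'I_n | (0 < m)%N) F m = \sum_m F m.
Proof.
move=> HF; rewrite big_mkcond; apply: eq_bigr => m _; case: ifP => // /negbT.
by rewrite -eqn0Ngt => /eqP /HF ->.
Qed.

Lemma lapsum i j : i != j ->
  \sum_(m : 'I_n | (0 < m)%N) lam m * phi m i * phi m j = - ((d i)^-1 * w i j / d j).
Proof.
move=> ij; case: Heig => H0 _ _ Hl _.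
rewrite sum_pos; last by move=> m /H0 [-> _]; rewrite !mul0r.
transitivity ((d i)^-1 * \sum_k w i k * (\sum_m phi m i * phi m j - \sum_m phi m k * phi m j)).
  symmetry; rewrite mulr_sumr.
  under eq_bigr do rewrite -sumrB mulr_sumr mulr_sumr.
  rewrite exchange_big; apply: eq_bigr => m _.
  rewrite -Hl /lap -[RHS]mulrA mulr_suml [RHS]mulr_sumr; apply: eq_bigr => k _; ring.
rewrite (bigD1 j) //= [X in _ + X]big1; last first.
  by move=> k kj; rewrite !compl2 (negbTE ij) (negbTE kj) !mul0r subrr mulr0.
rewrite !compl2 (negbTE ij) eqxx addr0 mul0r mul1r sub0r mulrN.
by rewrite mulrN mulrA.
Qed.


Variable j : 'I_n.
Let n_gt0 : (0 < n)%N := leq_ltn_trans (leq0n j) (ltn_ord j).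
Let m0 : 'I_n := Ordinal n_gt0.
Local Notation V := (vol w r).

Lemma volpos : 0 < V.
Proof.
rewrite /vol (bigD1 j) //=; apply: ltr_pwDl; first exact: dpos.
by apply: sumr_ge0 => k _; apply: powR_ge0.
Qed.

Lemma sqrtinv2 : (Num.sqrt V)^-1 * (Num.sqrt V)^-1 = V^-1.
Proof. by rewrite -invfM -expr2 sqr_sqrtr // ltW // volpos. Qed.

Lemma sum_pos2 (F : 'I_n -> R) :
  \sum_(m : 'I_n | (0 < m)%N) F m = \sum_m F m - F m0.
Proof.
rewrite [in RHS](bigD1 m0) //= addrC addrK; apply: eq_bigl => m.
by rewrite -val_eqE /= lt0n.
Qed.

Lemma mass_phi (m : 'I_n) : (0 < m)%N -> \sum_k d k * phi m k = 0.
Proof.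
move=> mp; case: Heig => H0 _ _ _ Hon.
have := Hon m0 m; rewrite /inner.
have -> : (m0 == m) = false by apply/negbTE; rewrite -val_eqE /= eq_sym -lt0n.
move=> E; apply: (@mulfI _ (Num.sqrt V)^-1).
  by rewrite invr_eq0 gt_eqF // sqrtr_gt0 volpos.
rewrite mulr0; apply: etrans (etrans _ E) _ => //; rewrite mulr_sumr; apply: eq_bigr => k _.
by have [_ ->] := H0 m0 erefl; ring.
Qed.

Definition hh k := \sum_(m : 'I_n | (0 < m)%N) (lam m)^-1 * phi m j * phi m k.

Lemma lap_hh i : lap w r hh i = (j == i)%:R / d j - V^-1.
Proof.
case: Heig => H0 Hpos _ Hl _.
rewrite /hh lap_lin.
rewrite (eq_bigr (fun m => phi m j * phi m i)); last first.
  move=> m mp; rewrite Hl mulrA -(mulrA _ (phi m j)) (mulrC (phi m j)) mulrA.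
  by rewrite mulVf ?mul1r // gt_eqF // Hpos.
rewrite sum_pos2 compl2; have [_ Hp] := H0 m0 erefl.
by rewrite !Hp sqrtinv2.
Qed.

Lemma mass_hh : mass w r hh = 0.
Proof.
rewrite /mass /hh; under eq_bigr do rewrite mulr_sumr.
rewrite exchange_big big1 // => m mp.
have E := mass_phi m mp.
rewrite (eq_bigr (fun k => (lam m)^-1 * phi m j * (d k * phi m k))).
  by rewrite -mulr_sumr E mulr0.
move=> k _; ring.
Qed.

Definition nu k := - V * (hh k - hh j).

Lemma is_eqmeas_ext S (u v : 'I_n -> R) :
  (forall k, u k = v k) -> is_eqmeas w r S u -> is_eqmeas w r S v.
Proof.
move=> E [H1 H2]; split => i Hi.
  by rewrite -(H1 i Hi) /lap; congr (_ * _); apply: eq_bigr => k _; rewrite !E.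
by rewrite -E H2.
Qed.

Lemma nu_eqmeas : is_eqmeas w r [set~ j] nu.
Proof.
split => i; rewrite in_setC1.
  move=> ij; rewrite /nu lap_affine lap_hh eq_sym (negbTE ij) mul0r sub0r mulrNN.
  by rewrite mulfV // gt_eqF // volpos.
by move/negPn/eqP ->; rewrite /nu subrr mulr0.
Qed.


Lemma eqmeas_val k : eqmeas w r [set~ j] k = nu k.
Proof.
have He : is_eqmeas w r [set~ j] (eqmeas w r [set~ j]).
  rewrite /eqmeas; match goal with |- context [xget ?x0 ?P] =>
    have := @xgetI _ x0 P [ffun k => nu k] end.
  apply; apply: is_eqmeas_ext nu_eqmeas => i; by rewrite ffunE.
have [H1 H2] := He; have [N1 N2] := nu_eqmeas.
set e := eqmeas w r [set~ j] in He H1 H2 *.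
have Hj : j \notin [set~ j] by rewrite in_setC1 eqxx.
pose u := fun k => e k - nu k.
have Hu1 : forall i, i != j -> lap w r u i = 0.
  move=> i ij; have ii : i \in [set~ j] by rewrite in_setC1.
  by rewrite /u lap_sub H1 // N1 // subrr.
have Hu : forall i, lap w r u i = 0.
  move=> i; case: (eqVneq i j) => [->|]; last exact: Hu1.
  have := mass_lap u; rewrite /mass (bigD1 j) //= big1 ?addr0.
    by move/eqP; rewrite mulf_eq0 (negbTE (dn0 j)) /= => /eqP.
  by move=> i' /Hu1 ->; rewrite mulr0.
have := @const_of_lap0 u Hu k j; rewrite /u (H2 j Hj) (N2 j Hj) subrr => /eqP.
by rewrite subr_eq0 => /eqP.
Qed.

Lemma fj_val i : fj w r j i = - V * hh i.
Proof.
rewrite /fj /avg eqmeas_val.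
have -> : mass w r (eqmeas w r [set~ j]) = V * V * hh j.
  rewrite /mass (eq_bigr (fun k => - V * (d k * hh k) + V * hh j * d k)).
    rewrite big_split /= -mulr_sumr -mulr_sumr.
    have Hm := mass_hh; rewrite /mass in Hm; rewrite Hm mulr0 add0r /vol; ring.
  by move=> k _; rewrite eqmeas_val /nu; ring.
rewrite /nu; field; by rewrite gt_eqF // volpos.
Qed.


Lemma key gamma i : i != j ->
  wtilde w r gamma lam phi i j = (d i)^-1 * w i j + gamma * d j / V * fj w r j i.
Proof.
move=> ij; rewrite /wtilde (negbTE ij).
rewrite (eq_bigr (fun m => lam m * phi m i * phi m j + gamma * ((lam m)^-1 * phi m j * phi m i))); last first.
  by move=> m _; ring.
rewrite big_split /= lapsum // -mulr_sumr.
have -> : \sum_(m : 'I_n | (0 < m)%N) (lam m)^-1 * phi m j * phi m i = hh i by [].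
rewrite fj_val; field.
by rewrite !dn0 gt_eqF // volpos.
Qed.

End Aux.

Theorem lemma6p14 (R : realType) (n : nat) (w : 'I_n -> 'I_n -> R) (r gamma : R)
  (lam : 'I_n -> R) (phi : 'I_n -> 'I_n -> R) :
  is_graph w -> 0 <= r -> r <= 1 -> 0 <= gamma ->
  inCgamma w r gamma ->
  is_eigendecomp w r lam phi ->
  [/\ (forall i j, 0 <= wtilde w r gamma lam phi i j),
      (forall i j, 0 < w i j -> 0 < wtilde w r gamma lam phi i j) &
      (inC w r -> forall i j, (degr w r i)^-1 * w i j <= wtilde w r gamma lam phi i j)].

Proof.
move=> [_ Hsym Hdiag Hw0 _] r0 r1 g0 Hg He.
have K := key _ _ _ _ _ _ Hsym He.
have D := dpos _ _ _ _ _ _ He.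
have T : forall i j, 0 <= gamma -> 0 <= fj w r j i ->
    0 <= gamma * degr w r j / vol w r * fj w r j i.
  move=> i j gg fg; apply: mulr_ge0 => //; apply: divr_ge0.
    by apply: mulr_ge0 => //; apply: ltW.
  exact: ltW (volpos _ _ _ _ _ _ He j).
have W : forall i j, 0 <= (degr w r i)^-1 * w i j.
  by move=> i j; apply: mulr_ge0 => //; rewrite invr_ge0 ltW.
split.
- move=> i j; case: (eqVneq i j) => [->|ij]; first by rewrite /wtilde eqxx.
  rewrite (K j gamma i ij).
  case: Hg => [->|[gp [HC0 HCg]]]; first by rewrite !mul0r addr0.
  case: (HCg j i ij) => [w0|pos]; last exact: ltW.
  rewrite w0 mulr0 add0r; apply: T => //.
  by case: (HC0 j i ij) => //; rewrite w0 ltxx.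
- move=> i j wp; case: (eqVneq i j) => [eij|ij].
    by move: wp; rewrite eij Hdiag ltxx.
  rewrite (K j gamma i ij).
  case: Hg => [->|[gp [HC0 HCg]]].
    by rewrite !mul0r addr0; apply: mulr_gt0 => //; rewrite invr_gt0.
  by case: (HCg j i ij) => // w0; move: wp; rewrite w0 ltxx.
- move=> HC i j; case: (eqVneq i j) => [->|ij].
    by rewrite /wtilde eqxx Hdiag mulr0.
  by rewrite (K j gamma i ij) lerDl; apply: T => //; apply: HC.
Qed.
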